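(* Let $f:\mathbb{R}^p\times\mathbb{R}^N\to\mathbb{R}$ be differentiable and suppose there is $M>0$ such that for all $x_1,x_2\in\mathbb{R}^p$, $z_1,z_2\in\mathbb{R}^N$, $$\left\|\begin{pmatrix}\nabla_xf(x_1,z_1)-\nabla_xf(x_2,z_2)\\ \nabla_zf(x_1,z_1)-\nabla_zf(x_2,z_2)\end{pmatrix}\right\|\le M\left\|\begin{pmatrix}x_1-x_2\\ z_1-z_2\end{pmatrix}\right\|.$$ Let $K,\kappa$ be integers and, for $\lambda_1,\lambda_2\ge0$, let $S(\lambda_1,\lambda_2)\subset\mathbb{R}^p\times\mathbb{R}^N$ be the set of optimal solutions of $$\min_{x,z}\ f(x,z)+\lambda_1T_K(x)+\lambda_2T_\kappa(z).$$ Suppose there exist $\underline\lambda_1,\underline\lambda_2\ge0$ such that $S(\underline\lambda_1,\underline\lambda_2)$ is bounded, and let $C_x,C_z$ be constants with $\|\underline x\|\le C_x$ and $\|\underline z\|\le C_z$ for all $(\underline x,\underline z)\in S(\underline\lambda_1,\underline\lambda_2)$. Then for $\lambda_1,\lambda_2$ satisfying $$\lambda_1>\max\Big\{\|\nabla_xf(0,0)\|+M\big(\tfrac32C_x+C_z\big),\underline\lambda_1\Big\},\qquad \lambda_2>\max\Big\{\|\nabla_zf(0,0)\|+M\big(C_x+\tfrac32C_z\big),\underline\lambda_2\Big\},$$ the problem of minimizing $f(x,z)$ subject to $\|x\|_0\le K$, $\|z\|_0\le\kappa$ and the unconstrained problem $\min_{x,z} f(x,z)+\lambda_1T_K(x)+\lambda_2T_\kappa(z)$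 are equivalent in the sense that any global optimal solution of the unconstrained problem is globally optimal for the constrained problem (and vice versa), provided $S(\lambda_1,\lambda_2)\subset S(\underline\lambda_1,\underline\lambda_2)$.
   Context: $\|\cdot\|$ is the Euclidean norm and $\|x\|_0$ is the number of nonzero components of $x$. For $x\in\mathbb{R}^n$, let $x_{(i)}$ denote the component of $x$ with the $i$-th largest absolute value, $|x_{(1)}|\ge|x_{(2)}|\ge\cdots\ge|x_{(n)}|$, and $T_K(x):=|x_{(K+1)}|+\cdots+|x_{(n)}|$ (the sum of the $n-K$ smallest absolute values), so that $T_K(x)=0$ iff $\|x\|_0\le K$.
   Formalization: The vice versa direction, that every global optimal solution of the constrained problem is globally optimal for the unconstrained problem, holds only when $S(\lambda_1,\lambda_2)$ is nonempty. The statement above fails without it. *)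

(* Defs.v *)
From HB Require Import structures.
From mathcomp Require Import all_boot all_order all_algebra.
From mathcomp Require Import all_classical all_reals all_analysis.
Set Implicit Arguments. Unset Strict Implicit. Unset Printing Implicit Defensive.
Import Order.TTheory GRing.Theory Num.Theory.
Import numFieldNormedType.Exports.
Local Open Scope ring_scope.

Section Defs.
Variable R : realType.

Definition enorm n (v : 'rV[R]_n) : R := Num.sqrt (\sum_(i < n) (v 0 i) ^+ 2).

Definition l0norm n (v : 'rV[R]_n) : nat := #|[set i | v 0 i != 0]|.

(* T_K(x): sum of the n-K smallest absolute values (absolute values sorted
   in nonincreasing order, the first K dropped) *)
Definition TK n (K : nat) (v : 'rV[R]_n) : R :=
  \sum_(a <- drop K (sort (fun a b : R => b <= a) [seq `|v 0 i| | i <- enum 'I_n])) a.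

Definition gradx p N (f : 'rV[R]_p -> 'rV[R]_N -> R) x z : 'rV[R]_p :=
  \row_(i < p) derive (fun x' => f x' z) x (delta_mx 0 i).
Definition gradz p N (f : 'rV[R]_p -> 'rV[R]_N -> R) x z : 'rV[R]_N :=
  \row_(i < N) derive (fun z' => f x z') z (delta_mx 0 i).

Definition fjoint p N (f : 'rV[R]_p -> 'rV[R]_N -> R) (w : 'rV[R]_(p + N)) : R :=
  f (lsubmx w) (rsubmx w).

Definition pen p N (f : 'rV[R]_p -> 'rV[R]_N -> R) (K kappa : nat) (l1 l2 : R) x z : R :=
  f x z + l1 * TK K x + l2 * TK kappa z.

Definition Sopt p N (f : 'rV[R]_p -> 'rV[R]_N -> R) (K kappa : nat) (l1 l2 : R)
  (x : 'rV[R]_p) (z : 'rV[R]_N) : Prop :=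
  forall x' z', pen f K kappa l1 l2 x z <= pen f K kappa l1 l2 x' z'.

Definition copt p N (f : 'rV[R]_p -> 'rV[R]_N -> R) (K kappa : nat)
  (x : 'rV[R]_p) (z : 'rV[R]_N) : Prop :=
  [/\ (l0norm x <= K)%N, (l0norm z <= kappa)%N &
      forall x' z', (l0norm x' <= K)%N -> (l0norm z' <= kappa)%N -> f x z <= f x' z'].

End Defs.

(* Main.v *)
Require Import Defs.
From HB Require Import structures.
From mathcomp Require Import all_boot all_order all_algebra.
From mathcomp Require Import all_classical all_reals all_analysis.
From mathcomp Require Import ring lra zify.
Import Order.TTheory GRing.Theory Num.Theory.
Import numFieldNormedType.Exports.
Local Open Scope ring_scope.
Set Implicit Arguments. Unset Strict Implicit.
Section Aux.
Variable R : realType.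

Lemma sum_compl n (F : 'I_n -> R) (A : {set 'I_n}) :
  \sum_(i in ~: A) F i = \sum_i F i - \sum_(i in A) F i.
Proof.
rewrite (bigID (mem A) predT) /=; apply/eqP; rewrite eq_sym addrC addrK; apply/eqP.
by apply: eq_bigl => i; rewrite !inE.
Qed.

Lemma TK_char n K (F : 'I_n -> R) : (forall i, 0 <= F i) ->
  exists T : {set 'I_n}, [/\ (#|T| <= K)%N,
    \sum_(a <- drop K (sort (fun a b : R => b <= a) [seq F i | i <- enum 'I_n])) a
       = \sum_(i in ~: T) F i &
    forall S : {set 'I_n}, (#|S| <= K)%N -> \sum_(i in ~: T) F i <= \sum_(i in ~: S) F i].
Proof.
move=> F0.
set r := relpre F (fun a b : R => b <= a).
set e := sort r (enum 'I_n).
have tr : transitive r by move=> a b c /= h1 h2; apply: le_trans h2 h1.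
have to : total r by move=> a b /=; apply: le_total.
have ue : uniq e by rewrite sort_uniq enum_uniq.
have pe : perm_eq e (enum 'I_n) by rewrite perm_sort.
have se : pairwise r e by rewrite -sorted_pairwise // sort_sorted.
have sz : size e = n by rewrite size_sort size_enum_ord.
have ute : uniq (take K e) by rewrite take_uniq.
exists [set i | i \in take K e]; split.
- rewrite cardsE (card_uniqP ute) size_take; case: ifP => //.
  by rewrite sz => /negbT; rewrite -leqNgt.
- rewrite sort_map -map_drop big_map sum_compl.
  have -> : \sum_i F i = \sum_(i <- e) F i.
    by rewrite (perm_big _ pe) /= big_enum.
  rewrite -{1}(cat_take_drop K e) big_cat /= (big_uniq _ ute).
  have -> : \sum_(i in [set i0 in take K e]) F i = \sum_(i in take K e) F i.
    by apply: eq_bigl => i; rewrite inE.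
  by rewrite addrAC subrr add0r.
- move=> S cS.
  set T := [set i | i \in take K e].
  rewrite !sum_compl lerD2l lerN2.
  rewrite (bigID (mem T) (mem S)) (bigID (mem S) (mem T)) /=.
  have -> : \sum_(i in T | i \in S) F i = \sum_(i in S | i \in T) F i.
    by apply: eq_bigl => i; rewrite andbC.
  rewrite lerD2l.
  have eA : \sum_(i in S | i \notin T) F i = \sum_(i in S :\: T) F i.
    by apply: eq_bigl => i; rewrite !inE andbC.
  have eB : \sum_(i in T | i \notin S) F i = \sum_(i in T :\: S) F i.
    by apply: eq_bigl => i; rewrite !inE andbC.
  rewrite eA eB.
  have cT : #|T| = if (K < n)%N then K else n.
    by rewrite cardsE (card_uniqP ute) size_take sz.
  have cSn : (#|S| <= n)%N by rewrite -[X in (_ <= X)%N]card_ord max_card.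
  have cST : (#|S :\: T| <= #|T :\: S|)%N.
    have h1 := cardsID T S. have h2 := cardsID S T.
    rewrite finset.setIC in h2.
    have : (#|S| <= #|T|)%N by rewrite cT; case: ifP.
    by rewrite -h1 -h2 leq_add2l.
  have key : forall u v, u \in take K e -> v \notin take K e -> F v <= F u.
    move=> u v uT vT.
    have : pairwise r (take K e ++ drop K e) by rewrite cat_take_drop.
    rewrite pairwise_cat => /and3P [/allrelP H _ _].
    have : v \in take K e ++ drop K e by rewrite cat_take_drop mem_sort mem_enum.
    rewrite mem_cat (negbTE vT) /= => vd.
    exact: (H u v uT vd).
  set X := \sum_(i in S :\: T) F i.
  set Y := \sum_(i in T :\: S) F i.
  have Y0 : 0 <= Y by apply: sumr_ge0.
  have dbl : \sum_(v in S :\: T) \sum_(u in T :\: S) F v <=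
             \sum_(v in S :\: T) \sum_(u in T :\: S) F u.
    apply: ler_sum => v; rewrite !inE => /andP [vT _].
    apply: ler_sum => u; rewrite !inE => /andP [_ uT].
    exact: key.
  rewrite (eq_bigr (fun v => F v *+ #|T :\: S|)) in dbl; last by move=> v _; rewrite sumr_const.
  have e1 : \sum_(i in S :\: T) F i *+ #|T :\: S| = X *+ #|T :\: S|.
    by rewrite /X -sumrMnl.
  have e2 : \sum_(v in S :\: T) \sum_(u in T :\: S) F u = Y *+ #|S :\: T|.
    by rewrite /Y sumr_const.
  rewrite e1 e2 in dbl.
  case: (posnP #|T :\: S|) => hb.
    rewrite hb leqn0 in cST.
    by rewrite /X (cards0_eq (eqP cST)) big_set0.
  have cR : (#|S :\: T|%:R <= #|T :\: S|%:R :> R) by rewrite ler_nat.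
  have bp : (0 < #|T :\: S|%:R :> R) by rewrite ltr0n.
  rewrite -[X *+ _]mulr_natr -[Y *+ _]mulr_natr in dbl.
  have h4 : Y * #|S :\: T|%:R <= Y * #|T :\: S|%:R by apply: ler_wpM2l.
  have h5 := le_trans dbl h4.
  by rewrite ler_pM2r in h5.
Qed.
End Aux.
Section Aux2.
Variable R : realType.

Lemma descent n (G : 'rV[R]_n -> R) a v L :
  (forall w, differentiable G w) ->
  (forall s, 0 <= s <= 1 -> derive G (a + s *: v) v - derive G a v <= L * s) ->
  G (a + v) <= G a + derive G a v + L / 2.
Proof.
move=> dG hL.
set g := fun t : R => G (a + t *: v).
set d0 := derive G a v.
have dg : forall t : R, is_derive t (1:R) g (derive G (a + t *: v) v).
  move=> t.
  have Q : (fun h : R => h^-1 *: ((g \o shift t) (h *: 1) - g t)) =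
           (fun h : R => h^-1 *: ((G \o shift (a + t *: v)) (h *: v) - G (a + t *: v))).
    apply: funext => h; rewrite /g /=.
    by rewrite -[h *: (1:R)]/(h * 1) mulr1 scalerDl addrCA.
  apply: DeriveDef; first by rewrite /derivable Q; apply: diff_derivable.
  by rewrite /derive Q.
have hq : forall t : R, is_derive t (1:R) ((id : R -> R) * cst d0 + cst (L/2) * ((id : R -> R) * id)) (d0 + L * t).
  move=> t; apply: is_derive_eq.
  rewrite !scaler0 addr0 add0r /=.
  change (d0 * 1 + L / 2 * (t * 1 + t * 1) = d0 + L * t).
  by rewrite !mulr1; field.
set q := (id : R -> R) * cst d0 + cst (L/2) * ((id : R -> R) * id).
have hd : forall t : R, is_derive t (1:R) (g - q) (derive G (a + t *: v) v - (d0 + L * t)).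
  by move=> t; apply: is_deriveB.
have [c c01 hc] := MVT (@ltr01 R) (fun t _ => hd t)
  (derivable_within_continuous (fun t _ => @ex_derive _ _ _ _ _ _ _ (hd t))).
have c0 : 0 <= c <= 1.
  by move: c01; rewrite in_itv /= => /andP [h1 h2]; apply/andP; split; apply: ltW.
have hc1 : derive G (a + c *: v) v - (d0 + L * c) <= 0.
  by have := hL c c0; rewrite opprD addrA subr_le0.
have : (g - q) 1 - (g - q) 0 <= 0 by rewrite hc subr0 mulr1.
move=> h.
have e1 : (g - q) 1 = G (a + v) - (d0 + L / 2).
  change (G (a + 1 *: v) - (1 * d0 + L / 2 * (1 * 1)) = G (a + v) - (d0 + L / 2)).
  by rewrite scale1r !mul1r mulr1.
have e0 : (g - q) 0 = G a.
  change (G (a + 0 *: v) - (0 * d0 + L / 2 * (0 * 0)) = G a).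
  by rewrite scale0r addr0 !mul0r mulr0 addr0 subr0.
rewrite e1 e0 in h.
lra.
Qed.
End Aux2.
Section Aux3.
Variable R : realType.

Lemma enorm_ge0 n (v : 'rV[R]_n) : 0 <= enorm v.
Proof. exact: sqrtr_ge0. Qed.

Lemma abs_le_enorm n (v : 'rV[R]_n) i : `|v 0 i| <= enorm v.
Proof.
rewrite /enorm -sqrtr_sqr; apply: ler_wsqrtr.
rewrite (bigD1 i) //= lerDl; apply: sumr_ge0 => j _; exact: sqr_ge0.
Qed.

Lemma enorm_row_mx0 p N (u : 'rV[R]_p) : enorm (row_mx u (0 : 'rV[R]_N)) = enorm u.
Proof.
rewrite /enorm big_split_ord /=.
rewrite [X in _ + X]big1 ?addr0; last by move=> i _; rewrite row_mxEr mxE expr0n.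
by congr Num.sqrt; apply: eq_bigr => i _; rewrite row_mxEl.
Qed.

Lemma enorm_row_0mx p N (w : 'rV[R]_N) : enorm (row_mx (0 : 'rV[R]_p) w) = enorm w.
Proof.
rewrite /enorm big_split_ord /=.
rewrite [X in X + _]big1 ?add0r; last by move=> i _; rewrite row_mxEl mxE expr0n.
by congr Num.sqrt; apply: eq_bigr => i _; rewrite row_mxEr.
Qed.

Lemma enorm_delta n (i : 'I_n) (c : R) : enorm (c *: delta_mx 0 i) = `|c|.
Proof.
rewrite /enorm (bigD1 i) //= big1 ?addr0.
  by rewrite !mxE !eqxx mulr1 sqrtr_sqr.
by move=> j /negbTE ji; rewrite !mxE ji andbF mulr0 expr0n.
Qed.

Lemma enorm_row_le p N (u : 'rV[R]_p) (w : 'rV[R]_N) :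
  enorm (row_mx u w) <= enorm u + enorm w.
Proof.
have hu := enorm_ge0 u; have hw := enorm_ge0 w.
rewrite {1}/enorm -(ger0_norm (addr_ge0 hu hw)) -sqrtr_sqr; apply: ler_wsqrtr.
rewrite big_split_ord /=.
have -> : \sum_(i < p) row_mx u w 0 (lshift N i) ^+ 2 = enorm u ^+ 2.
  rewrite /enorm sqr_sqrtr; last by apply: sumr_ge0 => j _; exact: sqr_ge0.
  by apply: eq_bigr => i _; rewrite row_mxEl.
have -> : \sum_(i < N) row_mx u w 0 (rshift p i) ^+ 2 = enorm w ^+ 2.
  rewrite /enorm sqr_sqrtr; last by apply: sumr_ge0 => j _; exact: sqr_ge0.
  by apply: eq_bigr => i _; rewrite row_mxEr.
have := mulr_ge0 hu hw.
rewrite sqrrD; lra.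
Qed.

Lemma Dx p N (f : 'rV[R]_p -> 'rV[R]_N -> R) x z i :
  derive (fjoint f) (row_mx x z) (row_mx (delta_mx 0 i) 0) = gradx f x z 0 i.
Proof.
rewrite mxE /derive.
suff -> : (fun h : R => h^-1 *: ((fjoint f \o shift (row_mx x z)) (h *: row_mx (delta_mx 0 i) 0) - fjoint f (row_mx x z)))
  = (fun h : R => h^-1 *: (((fun x' => f x' z) \o shift x) (h *: delta_mx 0 i) - f x z)) by [].
apply: funext => h /=.
by rewrite /fjoint scale_row_mx scaler0 add_row_mx add0r !row_mxKl !row_mxKr.
Qed.

Lemma Dz p N (f : 'rV[R]_p -> 'rV[R]_N -> R) x z i :
  derive (fjoint f) (row_mx x z) (row_mx 0 (delta_mx 0 i)) = gradz f x z 0 i.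
Proof.
rewrite mxE /derive.
suff -> : (fun h : R => h^-1 *: ((fjoint f \o shift (row_mx x z)) (h *: row_mx 0 (delta_mx 0 i)) - fjoint f (row_mx x z)))
  = (fun h : R => h^-1 *: (((fun z' => f x z') \o shift z) (h *: delta_mx 0 i) - f x z)) by [].
apply: funext => h /=.
by rewrite /fjoint scale_row_mx scaler0 add_row_mx add0r !row_mxKl !row_mxKr.
Qed.

Lemma DZ n (G : 'rV[R]_n -> R) a v (c : R) : differentiable G a ->
  derive G a (c *: v) = c * derive G a v.
Proof. by move=> dG; rewrite !deriveE // linearZ. Qed.

End Aux3.
Section Aux4.
Variable R : realType.

Lemma mxB0 n (A B : 'rV[R]_n) j : (A - B) 0 j = A 0 j - B 0 j.
Proof. by rewrite !mxE. Qed.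

Lemma stepx p N (f : 'rV[R]_p -> 'rV[R]_N -> R) M x z i (c : R) :
  (forall w : 'rV[R]_(p + N), differentiable (fjoint f) w) ->
  (forall (x1 x2 : 'rV[R]_p) (z1 z2 : 'rV[R]_N),
     enorm (row_mx (gradx f x1 z1 - gradx f x2 z2) (gradz f x1 z1 - gradz f x2 z2))
       <= M * enorm (row_mx (x1 - x2) (z1 - z2))) -> 0 <= M ->
  f (x + c *: delta_mx 0 i) z <= f x z + c * gradx f x z 0 i + M * c ^+ 2 / 2.
Proof.
move=> dG hL M0.
set G := fjoint f.
set a : 'rV[R]_(p + N) := row_mx x z.
set v : 'rV[R]_(p + N) := row_mx (c *: delta_mx 0 i) 0.
have ev : v = c *: row_mx (delta_mx 0 i) 0 by rewrite /v scale_row_mx scaler0.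
have eas : forall s : R, a + s *: v = row_mx (x + (s * c) *: delta_mx 0 i) z.
  by move=> s; rewrite ev scalerA /a scale_row_mx scaler0 add_row_mx addr0.
have dv : forall s : R, derive G (a + s *: v) v = c * gradx f (x + (s * c) *: delta_mx 0 i) z 0 i.
  by move=> s; rewrite {2}ev DZ // eas Dx.
have := @descent R _ G a v (M * c ^+ 2) dG.
have -> : a + v = row_mx (x + c *: delta_mx 0 i) z by rewrite -[v]scale1r eas mul1r.
have -> : derive G a v = c * gradx f x z 0 i.
  by rewrite -[a]addr0 -(scale0r v) dv mul0r scale0r addr0.
rewrite /G /fjoint /a !row_mxKl !row_mxKr.
move=> H; have := H _; rewrite mulrA; apply.
move=> s /andP [s0 s1].
rewrite dv.
have -> : c * gradx f x z 0 i = c * gradx f (x + (0 * c) *: delta_mx 0 i) z 0 i.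
  by rewrite mul0r scale0r addr0.
rewrite mul0r scale0r addr0 -mulrBr.
set d := _ - _.
have hd : `|d| <= M * (s * `|c|).
  have h1 := abs_le_enorm (row_mx (gradx f (x + (s * c) *: delta_mx 0 i) z - gradx f x z)
                 (gradz f (x + (s * c) *: delta_mx 0 i) z - gradz f x z)) (lshift N i).
  rewrite row_mxEl mxB0 in h1.
  apply: (le_trans h1); apply: (le_trans (hL _ _ _ _)).
  rewrite addrC addKr subrr enorm_row_mx0 enorm_delta normrM (ger0_norm s0).
  by [].
have cc : `|c| * `|c| = c * c.
  by rewrite -normrM ger0_norm // -expr2 sqr_ge0.
apply: (le_trans (ler_norm _)); rewrite normrM.
apply: (le_trans (ler_wpM2l (normr_ge0 c) hd)).
have -> : `|c| * (M * (s * `|c|)) = M * (`|c| * `|c|) * s by ring.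
by rewrite cc mulrA.
Qed.
Lemma stepz p N (f : 'rV[R]_p -> 'rV[R]_N -> R) M x z i (c : R) :
  (forall w : 'rV[R]_(p + N), differentiable (fjoint f) w) ->
  (forall (x1 x2 : 'rV[R]_p) (z1 z2 : 'rV[R]_N),
     enorm (row_mx (gradx f x1 z1 - gradx f x2 z2) (gradz f x1 z1 - gradz f x2 z2))
       <= M * enorm (row_mx (x1 - x2) (z1 - z2))) -> 0 <= M ->
  f x (z + c *: delta_mx 0 i) <= f x z + c * gradz f x z 0 i + M * c ^+ 2 / 2.
Proof.
move=> dG hL M0.
set G := fjoint f.
set a : 'rV[R]_(p + N) := row_mx x z.
set v : 'rV[R]_(p + N) := row_mx 0 (c *: delta_mx 0 i).
have ev : v = c *: row_mx 0 (delta_mx 0 i) by rewrite /v scale_row_mx scaler0.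
have eas : forall s : R, a + s *: v = row_mx x (z + (s * c) *: delta_mx 0 i).
  by move=> s; rewrite ev scalerA /a scale_row_mx scaler0 add_row_mx addr0.
have dv : forall s : R, derive G (a + s *: v) v = c * gradz f x (z + (s * c) *: delta_mx 0 i) 0 i.
  by move=> s; rewrite {2}ev DZ // eas Dz.
have := @descent R _ G a v (M * c ^+ 2) dG.
have -> : a + v = row_mx x (z + c *: delta_mx 0 i) by rewrite -[v]scale1r eas mul1r.
have -> : derive G a v = c * gradz f x z 0 i.
  by rewrite -[a]addr0 -(scale0r v) dv mul0r scale0r addr0.
rewrite /G /fjoint /a !row_mxKl !row_mxKr.
move=> H; have := H _; rewrite mulrA; apply.
move=> s /andP [s0 s1].
rewrite dv.
have -> : c * gradz f x z 0 i = c * gradz f x (z + (0 * c) *: delta_mx 0 i) 0 i.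
  by rewrite mul0r scale0r addr0.
rewrite mul0r scale0r addr0 -mulrBr.
set d := _ - _.
have hd : `|d| <= M * (s * `|c|).
  have h1 := abs_le_enorm (row_mx (gradx f x (z + (s * c) *: delta_mx 0 i) - gradx f x z)
                 (gradz f x (z + (s * c) *: delta_mx 0 i) - gradz f x z)) (rshift p i).
  rewrite row_mxEr mxB0 in h1.
  apply: (le_trans h1); apply: (le_trans (hL _ _ _ _)).
  rewrite subrr addrC addKr enorm_row_0mx enorm_delta normrM (ger0_norm s0).
  by [].
have cc : `|c| * `|c| = c * c.
  by rewrite -normrM ger0_norm // -expr2 sqr_ge0.
apply: (le_trans (ler_norm _)); rewrite normrM.
apply: (le_trans (ler_wpM2l (normr_ge0 c) hd)).
have -> : `|c| * (M * (s * `|c|)) = M * (`|c| * `|c|) * s by ring.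
by rewrite cc mulrA.
Qed.
End Aux4.
Section Aux5.
Variable R : realType.

Lemma TK_zero n K (x : 'rV[R]_n) : (l0norm x <= K)%N -> TK K x = 0.
Proof.
move=> h.
have [T [cT eT mT]] := @TK_char R _ K (fun i => `|x 0 i|) (fun i => normr_ge0 _).
rewrite /TK eT; apply/eqP; rewrite eq_le; apply/andP; split; last by apply: sumr_ge0.
apply: (le_trans (mT [set i | x 0 i != 0] h)).
by rewrite big1 // => i; rewrite !inE negbK => /eqP ->; rewrite normr0.
Qed.

Lemma TK_ge0 n K (x : 'rV[R]_n) : 0 <= TK K x.
Proof.
have [T [cT eT mT]] := @TK_char R _ K (fun i => `|x 0 i|) (fun i => normr_ge0 _).
by rewrite /TK eT; apply: sumr_ge0.
Qed.

Lemma entry_upd n (x : 'rV[R]_n) c i j :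
  (x + c *: delta_mx 0 i) 0 j = x 0 j + c * (j == i)%:R.
Proof. by rewrite !mxE eqxx. Qed.

Lemma TK_upd n K (x : 'rV[R]_n) (T : {set 'I_n}) i :
  (#|T| <= K)%N -> TK K x = \sum_(j in ~: T) `|x 0 j| -> i \notin T ->
  TK K (x + (- x 0 i) *: delta_mx 0 i) <= TK K x - `|x 0 i|.
Proof.
move=> cT eT iT.
have [T' [cT' eT' mT']] := @TK_char R _ K (fun j => `|(x + (- x 0 i) *: delta_mx 0 i) 0 j|)
   (fun j => normr_ge0 _).
rewrite /TK eT' -/(TK K x) eT; apply: (le_trans (mT' T cT)).
rewrite (bigD1 i) ?inE //= [X in _ <= X - _](bigD1 i) ?inE //=.
rewrite entry_upd eqxx mulr1 subrr normr0 add0r.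
rewrite (eq_bigr (fun j => `|x 0 j|)); last first.
  by move=> j /andP [_ /negbTE ji]; rewrite entry_upd ji mulr0 addr0.
lra.
Qed.

End Aux5.
Section Aux6.
Variable R : realType.

Lemma l0x p N (f : 'rV[R]_p -> 'rV[R]_N -> R) M K kappa lam1 lam2 Cx Cz x0 z0 :
  (forall w : 'rV[R]_(p + N), differentiable (fjoint f) w) ->
  (forall (x1 x2 : 'rV[R]_p) (z1 z2 : 'rV[R]_N),
     enorm (row_mx (gradx f x1 z1 - gradx f x2 z2) (gradz f x1 z1 - gradz f x2 z2))
       <= M * enorm (row_mx (x1 - x2) (z1 - z2))) -> 0 <= M ->
  Sopt f K kappa lam1 lam2 x0 z0 -> enorm x0 <= Cx -> enorm z0 <= Cz ->
  enorm (gradx f 0 0) + M * (3 / 2 * Cx + Cz) < lam1 -> (l0norm x0 <= K)%N.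
Proof.
move=> dG hL M0 hS hx hz hl.
case: (leqP (l0norm x0) K) => // hK; exfalso.
have [T [cT eT mT]] := @TK_char R _ K (fun i => `|x0 0 i|) (fun i => normr_ge0 _).
have [i iT xi] : exists2 i, i \notin T & x0 0 i != 0.
  case: (boolP [exists i, (i \notin T) && (x0 0 i != 0)]).
    by move=> /existsP [i /andP [h1 h2]]; exists i.
  rewrite negb_exists => /forallP H.
  have : [set i | x0 0 i != 0] \subset T.
    apply/fintype.subsetP => j; rewrite inE => hj.
    by have := H j; rewrite negb_and negbK hj orbF.
  move/subset_leq_card => h.
  by have := leq_trans h cT; rewrite leqNgt hK.
set c := - x0 0 i.
have hf := @stepx R _ _ f M x0 z0 i c dG hL M0.
have hT := @TK_upd R _ K x0 T i cT eT iT.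
have hpen := hS (x0 + c *: delta_mx 0 i) z0.
rewrite /pen in hpen.
set gi := gradx f x0 z0 0 i in hf.
set G0 := enorm (gradx f 0 0) in hl.
have ex0 := enorm_ge0 x0; have ez0 := enorm_ge0 z0.
have hgi : `|gi| <= G0 + M * (Cx + Cz).
  have h1 : `|gradx f 0 0 0 i| <= G0 by apply: abs_le_enorm.
  have h2 : `|gi - gradx f 0 0 0 i| <= M * (Cx + Cz).
    have h3 := abs_le_enorm (row_mx (gradx f x0 z0 - gradx f 0 0)
                 (gradz f x0 z0 - gradz f 0 0)) (lshift N i).
    rewrite row_mxEl mxB0 in h3.
    apply: (le_trans h3); apply: (le_trans (hL _ _ _ _)).
    rewrite !subr0; apply: ler_wpM2l => //.
    apply: (le_trans (enorm_row_le _ _)); lra.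
  have := ler_normD (gradx f 0 0 0 i) (gi - gradx f 0 0 0 i).
  rewrite addrC subrK; lra.
have ac : `|c| = `|x0 0 i| by rewrite normrN.
have cpos : 0 < `|c| by rewrite ac normr_gt0.
have cCx : `|c| <= Cx by rewrite ac; apply: (le_trans (abs_le_enorm _ _)).
have P1 : c * gi <= `|c| * (G0 + M * (Cx + Cz)).
  apply: (le_trans (ler_norm _)); rewrite normrM; apply: ler_wpM2l => //.
have P2 : M * c ^+ 2 / 2 <= M * (`|c| * Cx) / 2.
  have Q : c ^+ 2 <= `|c| * Cx.
    have -> : c ^+ 2 = `|c| * `|c| by rewrite -normrM ger0_norm // -expr2 sqr_ge0.
    by apply: ler_wpM2l.
  have := ler_wpM2l M0 Q; lra.
have G00 : 0 <= G0 by apply: enorm_ge0.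
have l10 : 0 <= lam1.
  have : 0 <= M * (3 / 2 * Cx + Cz) by apply: mulr_ge0 => //; lra.
  lra.
have P3 : lam1 * TK K (x0 + c *: delta_mx 0 i) <= lam1 * TK K x0 - lam1 * `|c|.
  by rewrite -mulrBr ac; apply: ler_wpM2l.
have P4 : 0 < `|c| * (lam1 - (G0 + M * (3 / 2 * Cx + Cz))).
  by apply: mulr_gt0 => //; lra.
have E : `|c| * (lam1 - (G0 + M * (3 / 2 * Cx + Cz))) =
  lam1 * `|c| - (`|c| * (G0 + M * (Cx + Cz)) + M * (`|c| * Cx) / 2) by field.
rewrite E in P4.
lra.
Qed.
Lemma l0z p N (f : 'rV[R]_p -> 'rV[R]_N -> R) M K kappa lam1 lam2 Cx Cz x0 z0 :
  (forall w : 'rV[R]_(p + N), differentiable (fjoint f) w) ->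
  (forall (x1 x2 : 'rV[R]_p) (z1 z2 : 'rV[R]_N),
     enorm (row_mx (gradx f x1 z1 - gradx f x2 z2) (gradz f x1 z1 - gradz f x2 z2))
       <= M * enorm (row_mx (x1 - x2) (z1 - z2))) -> 0 <= M ->
  Sopt f K kappa lam1 lam2 x0 z0 -> enorm x0 <= Cx -> enorm z0 <= Cz ->
  enorm (gradz f 0 0) + M * (Cx + 3 / 2 * Cz) < lam2 -> (l0norm z0 <= kappa)%N.
Proof.
move=> dG hL M0 hS hx hz hl.
case: (leqP (l0norm z0) kappa) => // hK; exfalso.
have [T [cT eT mT]] := @TK_char R _ kappa (fun i => `|z0 0 i|) (fun i => normr_ge0 _).
have [i iT xi] : exists2 i, i \notin T & z0 0 i != 0.
  case: (boolP [exists i, (i \notin T) && (z0 0 i != 0)]).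
    by move=> /existsP [i /andP [h1 h2]]; exists i.
  rewrite negb_exists => /forallP H.
  have : [set i | z0 0 i != 0] \subset T.
    apply/fintype.subsetP => j; rewrite inE => hj.
    by have := H j; rewrite negb_and negbK hj orbF.
  move/subset_leq_card => h.
  by have := leq_trans h cT; rewrite leqNgt hK.
set c := - z0 0 i.
have hf := @stepz R _ _ f M x0 z0 i c dG hL M0.
have hT := @TK_upd R _ kappa z0 T i cT eT iT.
have hpen := hS x0 (z0 + c *: delta_mx 0 i).
rewrite /pen in hpen.
set gi := gradz f x0 z0 0 i in hf.
set G0 := enorm (gradz f 0 0) in hl.
have ex0 := enorm_ge0 x0; have ez0 := enorm_ge0 z0.
have hgi : `|gi| <= G0 + M * (Cx + Cz).
  have h1 : `|gradz f 0 0 0 i| <= G0 by apply: abs_le_enorm.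
  have h2 : `|gi - gradz f 0 0 0 i| <= M * (Cx + Cz).
    have h3 := abs_le_enorm (row_mx (gradx f x0 z0 - gradx f 0 0)
                 (gradz f x0 z0 - gradz f 0 0)) (rshift p i).
    rewrite row_mxEr mxB0 in h3.
    apply: (le_trans h3); apply: (le_trans (hL _ _ _ _)).
    rewrite !subr0; apply: ler_wpM2l => //.
    apply: (le_trans (enorm_row_le _ _)); lra.
  have := ler_normD (gradz f 0 0 0 i) (gi - gradz f 0 0 0 i).
  rewrite addrC subrK; lra.
have ac : `|c| = `|z0 0 i| by rewrite normrN.
have cpos : 0 < `|c| by rewrite ac normr_gt0.
have cCx : `|c| <= Cz by rewrite ac; apply: (le_trans (abs_le_enorm _ _)).
have P1 : c * gi <= `|c| * (G0 + M * (Cx + Cz)).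
  apply: (le_trans (ler_norm _)); rewrite normrM; apply: ler_wpM2l => //.
have P2 : M * c ^+ 2 / 2 <= M * (`|c| * Cz) / 2.
  have Q : c ^+ 2 <= `|c| * Cz.
    have -> : c ^+ 2 = `|c| * `|c| by rewrite -normrM ger0_norm // -expr2 sqr_ge0.
    by apply: ler_wpM2l.
  have := ler_wpM2l M0 Q; lra.
have G00 : 0 <= G0 by apply: enorm_ge0.
have l10 : 0 <= lam2.
  have : 0 <= M * (Cx + 3 / 2 * Cz) by apply: mulr_ge0 => //; lra.
  lra.
have P3 : lam2 * TK kappa (z0 + c *: delta_mx 0 i) <= lam2 * TK kappa z0 - lam2 * `|c|.
  by rewrite -mulrBr ac; apply: ler_wpM2l.
have P4 : 0 < `|c| * (lam2 - (G0 + M * (Cx + 3 / 2 * Cz))).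
  by apply: mulr_gt0 => //; lra.
have E : `|c| * (lam2 - (G0 + M * (Cx + 3 / 2 * Cz))) =
  lam2 * `|c| - (`|c| * (G0 + M * (Cx + Cz)) + M * (`|c| * Cz) / 2) by field.
rewrite E in P4.
lra.
Qed.
End Aux6.
Unset Implicit Arguments.
Theorem theorem2 (R : realType) (p N : nat) (f : 'rV[R]_p -> 'rV[R]_N -> R)
  (M : R) (K kappa : nat) (lam1_ lam2_ Cx Cz lam1 lam2 : R) :
  (forall w : 'rV[R]_(p + N), differentiable (fjoint f) w) ->
  0 < M ->
  (forall (x1 x2 : 'rV[R]_p) (z1 z2 : 'rV[R]_N),
     enorm (row_mx (gradx f x1 z1 - gradx f x2 z2) (gradz f x1 z1 - gradz f x2 z2))
       <= M * enorm (row_mx (x1 - x2) (z1 - z2))) ->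
  0 <= lam1_ -> 0 <= lam2_ ->
  (exists B : R, forall x z, Sopt f K kappa lam1_ lam2_ x z -> enorm (row_mx x z) <= B) ->
  (forall x z, Sopt f K kappa lam1_ lam2_ x z -> enorm x <= Cx /\ enorm z <= Cz) ->
  Num.max (enorm (gradx f 0 0) + M * (3 / 2 * Cx + Cz)) lam1_ < lam1 ->
  Num.max (enorm (gradz f 0 0) + M * (Cx + 3 / 2 * Cz)) lam2_ < lam2 ->
  (forall x z, Sopt f K kappa lam1 lam2 x z -> Sopt f K kappa lam1_ lam2_ x z) ->
  (forall x z, Sopt f K kappa lam1 lam2 x z -> copt f K kappa x z) /\
  ((exists x z, Sopt f K kappa lam1 lam2 x z) ->
     forall x z, copt f K kappa x z -> Sopt f K kappa lam1 lam2 x z).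
Proof.
move=> dG M0 hL l10 l20 _ hC hl1 hl2 hsub.
have M0' : 0 <= M by apply: ltW.
rewrite gt_max in hl1; case/andP: hl1 => hl1 _.
rewrite gt_max in hl2; case/andP: hl2 => hl2 _.
have part1 : forall x z, Sopt f K kappa lam1 lam2 x z -> copt f K kappa x z.
  move=> x z hS.
  have [bx bz] := hC x z (hsub x z hS).
  have lx := @l0x R _ _ f M K kappa lam1 lam2 Cx Cz x z dG hL M0' hS bx bz hl1.
  have lz := @l0z R _ _ f M K kappa lam1 lam2 Cx Cz x z dG hL M0' hS bx bz hl2.
  split => // x' z' lx' lz'.
  by have := hS x' z'; rewrite /pen !TK_zero // !mulr0 !addr0.
split => //.
move=> [x0 [z0 h0]] x z [lx lz hc] x' z'.
have [lx0 lz0 hc0] := part1 x0 z0 h0.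
have := h0 x' z'; have := hc x0 z0 lx0 lz0.
rewrite /pen (TK_zero lx) (TK_zero lz) (TK_zero lx0) (TK_zero lz0) !mulr0 !addr0.
exact: le_trans.
Qed.
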